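(* Let $S$ be a finite set, $X\subseteq S$ and $x\in X$, and let $\mathcal{P}=\{X,X\setminus\{x\}\}$. Then $\mathcal{P}\in\bullet(\{2^Y\mid\emptyset\subsetneq Y\subseteq X\})$.
   Context: Here $2^Y=\{W\subseteq S\mid W\subseteq Y\}$ (note that $2^\emptyset=\{\emptyset\}$ is excluded from the generating family). For sets $A,B$, $A\,\dot\cup\,B=A\cup B$ is defined only when $A\cap B=\emptyset$, and $A\,\dot\setminus\,B=A\setminus B$ is defined only when $B\subseteq A$. For a finite family $\mathcal{G}$ of sets, $\bullet(\mathcal{G})$ is the smallest family of sets containing $\emptyset$ and every member of $\mathcal{G}$ and closed under all well-defined disjoint unions and subset complements. *)

(* Defs.v *)
From mathcomp Require Import all_boot.
Set Implicit Arguments. Unset Strict Implicit. Unset Printing Implicit Defensive.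

(* The finite ground set S is the finType T; sets are {set T}, families of
   sets are {set {set T}}, generating collections are {set {set {set T}}}. *)

Definition pow2 (T : finType) (Y : {set T}) : {set {set T}} := powerset Y.

Inductive bullet (T : finType) (G : {set {set {set T}}}) : {set {set T}} -> Prop :=
| bullet_empty : bullet G set0
| bullet_gen A : A \in G -> bullet G A
| bullet_dunion A B : bullet G A -> bullet G B -> [disjoint A & B] ->
    bullet G (A :|: B)
| bullet_sdiff A B : bullet G A -> bullet G B -> B \subset A ->
    bullet G (A :\: B).

Definition genX (T : finType) (X : {set T}) : {set {set {set T}}} :=
  [set pow2 Y | Y in [set Y in powerset X | Y != set0]].

(* Main.v *)
Require Import Defs.
From mathcomp Require Import all_boot.

Definition U {T : finType} (Z Y : {set T}) : {set {set T}} :=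
  [set W in powerset Y | Z \subset W].

Lemma U_step (T : finType) (Z Y : {set T}) (z : T) : z \in Z -> Z \subset Y ->
  U Z Y = U (Z :\ z) Y :\: U (Z :\ z) (Y :\ z).
Proof.
move=> zZ ZY; apply/setP => W; rewrite /U !inE ?powersetE.
case WY: (W \subset Y) => /=; last by rewrite andbF.
case zW: (z \in W).
- have -> : W \subset Y :\ z = false.
    by apply/negbTE/negP => /subsetP /(_ z zW); rewrite !inE eqxx.
  rewrite /=; apply/idP/idP => H.
    by apply: subset_trans H; apply: subD1set.
  apply/subsetP => u uZ; case: (eqVneq u z) => [->//|uz].
  by apply: (subsetP H); rewrite !inE uz.
- have -> : W \subset Y :\ z.
    apply/subsetP => u uW; rewrite !inE (subsetP WY) // andbT.
    by apply/eqP => e; rewrite -e uW in zW.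
  rewrite andNb; apply/negbTE/negP => /subsetP /(_ z zZ); by rewrite zW.
Qed.

Lemma U_bullet (T : finType) (X : {set T}) n : forall Z Y : {set T},
  #|Z| = n -> Z \proper Y -> Y \subset X -> bullet (genX X) (U Z Y).
Proof.
elim: n => [|n IH] Z Y cZ ZY YX.
- move/eqP: (cZ); rewrite cards_eq0 => /eqP Z0; subst Z.
  have -> : U set0 Y = pow2 Y.
    by apply/setP => W; rewrite /U /pow2 !inE sub0set andbT.
  apply: bullet_gen; apply/imsetP; exists Y => //.
  rewrite !inE ?powersetE YX /=; apply/eqP => Y0.
  by move: ZY; rewrite Y0 properE subxx andbF.
- have : 0 < #|Z| by rewrite cZ.
  case/card_gt0P => z zZ.
  have cZ' : #|Z :\ z| = n by move: cZ; rewrite (cardsD1 z Z) zZ add1n => -[].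
  have ZY' := proper_sub ZY.
  rewrite (@U_step _ _ _ _ zZ ZY'); apply: bullet_sdiff.
  + apply: IH => //; apply: sub_proper_trans ZY; exact: subD1set.
  + apply: IH => //; last by apply: subset_trans YX; apply: subD1set.
    case/properP: ZY => _ [y yY yZ].
    apply/properP; split; first by apply: setSD.
    exists y; first by rewrite !inE yY andbT; apply/eqP => e; rewrite e zZ in yZ.
    by rewrite !inE (negbTE yZ) andbF.
  + apply/subsetP => W; rewrite /U !inE ?powersetE => /andP [H1 H2].
    by rewrite H2 (subset_trans H1) ?subD1set.
Qed.

Theorem lemma6p11 (T : finType) (X : {set T}) (x : T) (hx : x \in X) :
  bullet (genX X) [set X; X :\ x].
Proof.
have -> : [set X; X :\ x] = U (X :\ x) X.
  apply/setP => W; rewrite /U !inE ?powersetE.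
  apply/idP/idP.
  - by case/orP => /eqP ->; rewrite ?subxx ?subD1set.
  - case/andP => WX XW; case xW: (x \in W).
    + apply/orP; left; rewrite eqEsubset WX /=.
      apply/subsetP => u uX; case: (eqVneq u x) => [->//|ux].
      by apply: (subsetP XW); rewrite !inE ux.
    + apply/orP; right; rewrite eqEsubset XW andbT.
      apply/subsetP => u uW; rewrite !inE (subsetP WX) // andbT.
      by apply/eqP => e; rewrite -e uW in xW.
apply: (@U_bullet _ X #|X :\ x|) => //.
by apply: properD1.
Qed.
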